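(* Let $\langle X,d_X\rangle$ and $\langle Y,d_Y\rangle$ be metric spaces with completions $\langle X^*,d^*_X,\iota_X\rangle$ and $\langle Y^*,d^*_Y,\iota_Y\rangle$, and let $\hat f:X^*\to Y^*$ be continuous. (a) There is a continuous $f:\langle X,d_X\rangle\to\langle Y,d_Y\rangle$ with $\iota_Y\circ f=\hat f\circ\iota_X$ if and only if $\operatorname{ran}(\hat f\circ\iota_X)\subseteq\operatorname{ran}\iota_Y$. Moreover, such $f$ is unique and it is Cauchy-continuous. (b) There exist a cardinal $\eta\leq|X|+|Y|$, a metric $d'$ on $\eta$, and dense isometries $\iota:\langle Y,d_Y\rangle\to\langle\eta,d'\rangle$ and $\iota':\langle\eta,d'\rangle\to\langle Y^*,d^*_Y\rangle$ such that $\operatorname{ran}(\hat f\circ\iota_X)\subseteq\operatorname{ran}\iota'$.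
   Context: A dense isometry is a distance-preserving map (not necessarily onto) with dense image. A completion of $\langle X,d\rangle$ is a triple $\langle X^*,d^*,\iota\rangle$ with $\langle X^*,d^*\rangle$ complete and $\iota$ a dense isometry from $\langle X,d\rangle$ into it. A function between metric spaces is Cauchy-continuous if it maps Cauchy sequences to Cauchy sequences. *)

(* Defs.v *)
From Stdlib Require Import Reals.
Open Scope R_scope.

Definition is_metric {T : Type} (d : T -> T -> R) : Prop :=
  (forall x y, 0 <= d x y) /\
  (forall x y, d x y = 0 <-> x = y) /\
  (forall x y, d x y = d y x) /\
  (forall x y z, d x z <= d x y + d y z).

Definition cauchy_seq {T : Type} (d : T -> T -> R) (u : nat -> T) : Prop :=
  forall eps, 0 < eps -> exists N, forall m n, (N <= m)%nat -> (N <= n)%nat -> d (u m) (u n) < eps.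

Definition seq_converges_to {T : Type} (d : T -> T -> R) (u : nat -> T) (l : T) : Prop :=
  forall eps, 0 < eps -> exists N, forall n, (N <= n)%nat -> d (u n) l < eps.

Definition complete {T : Type} (d : T -> T -> R) : Prop :=
  forall u, cauchy_seq d u -> exists l, seq_converges_to d u l.

Definition isometry {T U : Type} (dT : T -> T -> R) (dU : U -> U -> R) (i : T -> U) : Prop :=
  forall x y, dU (i x) (i y) = dT x y.

Definition dense_image {T U : Type} (dU : U -> U -> R) (i : T -> U) : Prop :=
  forall y eps, 0 < eps -> exists x, dU y (i x) < eps.

Definition dense_isometry {T U : Type} (dT : T -> T -> R) (dU : U -> U -> R) (i : T -> U) : Prop :=
  isometry dT dU i /\ dense_image dU i.

Definition is_completion {X Xs : Type} (d : X -> X -> R) (ds : Xs -> Xs -> R) (i : X -> Xs) : Prop :=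
  is_metric ds /\ complete ds /\ dense_isometry d ds i.

Definition continuous_map {T U : Type} (dT : T -> T -> R) (dU : U -> U -> R) (f : T -> U) : Prop :=
  forall x eps, 0 < eps -> exists delta, 0 < delta /\ forall y, dT x y < delta -> dU (f x) (f y) < eps.

Definition cauchy_continuous {T U : Type} (dT : T -> T -> R) (dU : U -> U -> R) (f : T -> U) : Prop :=
  forall u, cauchy_seq dT u -> cauchy_seq dU (fun n => f (u n)).

Definition in_range {T U : Type} (g : T -> U) (y : U) : Prop := exists x, g x = y.

(* Main.v *)
Require Import Defs.
From Stdlib Require Import Reals Lra ClassicalEpsilon ProofIrrelevance.
Open Scope R_scope.

Theorem lemma4p3
  (X Y Xs Ys : Type)
  (dX : X -> X -> R) (dY : Y -> Y -> R)
  (dXs : Xs -> Xs -> R) (dYs : Ys -> Ys -> R)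
  (iX : X -> Xs) (iY : Y -> Ys) (fhat : Xs -> Ys) :
  is_metric dX -> is_metric dY ->
  is_completion dX dXs iX -> is_completion dY dYs iY ->
  continuous_map dXs dYs fhat ->
  (* (a) *)
  ( ((exists f : X -> Y, continuous_map dX dY f /\ forall x, iY (f x) = fhat (iX x))
      <-> (forall x, in_range iY (fhat (iX x))))
    /\ (forall f g : X -> Y,
          continuous_map dX dY f -> (forall x, iY (f x) = fhat (iX x)) ->
          continuous_map dX dY g -> (forall x, iY (g x) = fhat (iX x)) ->
          forall x, f x = g x)
    /\ (forall f : X -> Y,
          continuous_map dX dY f -> (forall x, iY (f x) = fhat (iX x)) ->
          cauchy_continuous dX dY f) )
  /\
  (* (b): eta is a set of cardinality <= |X| + |Y|, i.e. injects into X + Y *)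
  (exists (E : Type) (card : E -> (X + Y)%type) (dE : E -> E -> R)
          (i : Y -> E) (i' : E -> Ys),
      (forall e1 e2, card e1 = card e2 -> e1 = e2) /\
      is_metric dE /\
      dense_isometry dY dE i /\ dense_isometry dE dYs i' /\
      (forall x, in_range i' (fhat (iX x)))).
Proof.
  intros mX mY [mXs [cXs [isoX denX]]] [mYs [cYs [isoY denY]]] cf.
  destruct mYs as [Yp [Y0 [Ysym Ytri]]].
  assert (injY : forall a b, iY a = iY b -> a = b).
  { intros a b h. destruct mY as [_ [H0 _]]. apply H0. rewrite <- isoY, h. apply Y0; reflexivity. }
  split; [split; [|split]|].
  - split.
    + intros [f [_ hf]] x. exists (f x). apply hf.
    + intros H.
      exists (fun x => proj1_sig (constructive_indefinite_description _ (H x))).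
      split.
      * intros x eps heps. destruct (cf (iX x) eps heps) as [dl [hdl Hd]].
        exists dl; split; [exact hdl|]. intros y hy.
        destruct (constructive_indefinite_description _ (H x)) as [a ha].
        destruct (constructive_indefinite_description _ (H y)) as [b hb]. simpl.
        rewrite <- isoY, ha, hb. apply Hd. rewrite isoX. exact hy.
      * intros x. destruct (constructive_indefinite_description _ (H x)) as [a ha]. exact ha.
  - intros f g _ hf _ hg x. apply injY. rewrite hf, hg. reflexivity.
  - intros f _ hf u hu.
    assert (hc : cauchy_seq dXs (fun n => iX (u n))).
    { intros eps he. destruct (hu eps he) as [N HN]. exists N. intros m n hm hn.
      rewrite isoX. apply HN; assumption. }
    destruct (cXs _ hc) as [l hl].
    intros eps he.
    destruct (cf l (eps/2)) as [dl [hdl Hd]]; [lra|].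
    destruct (hl dl hdl) as [N HN]. exists N. intros m n hm hn.
    rewrite <- isoY, !hf.
    destruct mXs as [_ [_ [Xsym _]]].
    assert (h1 := Hd _ (ltac:(rewrite Xsym; apply HN; exact hm))).
    assert (h2 := Hd _ (ltac:(rewrite Xsym; apply HN; exact hn))).
    rewrite Ysym in h1.
    pose proof (Ytri (fhat (iX (u m))) (fhat l) (fhat (iX (u n)))). lra.
  - set (P := fun z : Ys => (exists y, iY y = z) \/ (exists x, fhat (iX x) = z)).
    set (E := {z : Ys | P z}).
    assert (Hc : forall e : E, {x : X | fhat (iX x) = proj1_sig e} + {y : Y | iY y = proj1_sig e}).
    { intros [z pz]. simpl.
      destruct (excluded_middle_informative (exists y, iY y = z)) as [h|h].
      - right. exact (constructive_indefinite_description _ h).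
      - left. apply constructive_indefinite_description.
        destruct pz as [p|p]; [contradiction|exact p]. }
    assert (eqE : forall e1 e2 : E, proj1_sig e1 = proj1_sig e2 -> e1 = e2).
    { intros [a pa] [b pb]; simpl; intros ->. f_equal. apply proof_irrelevance. }
    exists E, (fun e => match Hc e with inl (exist _ x _) => inl x | inr (exist _ y _) => inr y end).
    exists (fun a b => dYs (proj1_sig a) (proj1_sig b)).
    exists (fun y => exist P (iY y) (or_introl (ex_intro _ y eq_refl))).
    exists (@proj1_sig Ys P).
    split; [|split; [|split; [|split]]].
    + intros e1 e2. destruct (Hc e1) as [[x1 h1]|[y1 h1]]; destruct (Hc e2) as [[x2 h2]|[y2 h2]];
        intros h; inversion h; subst; apply eqE; congruence.
    + split; [|split; [|split]].
      * intros; apply Yp.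
      * intros a b; split; intros h; [apply eqE, Y0; exact h|subst; apply Y0; reflexivity].
      * intros; apply Ysym.
      * intros; apply Ytri.
    + split.
      * intros a b. simpl. apply isoY.
      * intros e eps he. destruct (denY (proj1_sig e) eps he) as [y hy]. exists y. exact hy.
    + split.
      * intros a b. reflexivity.
      * intros z eps he. destruct (denY z eps he) as [y hy].
        exists (exist P (iY y) (or_introl (ex_intro _ y eq_refl))). exact hy.
    + intros x. exists (exist P (fhat (iX x)) (or_intror (ex_intro _ x eq_refl))). reflexivity.
Qed.
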